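(* Let $g:\{\pm1\}^{m_1}\times\{\pm1\}^{m_2}\to\{\pm1\}$ and $g':\{\pm1\}^{m_1'}\times\{\pm1\}^{m_2'}\to\{\pm1\}$ be gadgets such that $\hat g(S,T)=0$ whenever $S=\emptyset$ or $T=\emptyset$, and likewise for $g'$. Then for all $k,d,n$, $$L_{1,k}(g,d,m_1,m_2,n)\le 2^{(m_1+m_2+m_1'+m_2')k/2}\,L_{1,k}(g',d,m_1',m_2',n).$$
   Context: $\hat g(S,T)=\mathbb{E}[g(\mathbf{x},\mathbf{y})\prod_{j\in S}\mathbf{x}_j\prod_{j\in T}\mathbf{y}_j]$ for uniform $\mathbf{x},\mathbf{y}$. For a randomized two-party protocol $\mathcal{C}:(\{\pm1\}^{m_1})^n\times(\{\pm1\}^{m_2})^n\to[-1,1]$ (value = expected output over internal randomness; inputs are $n$ blocks $x_i\in\{\pm1\}^{m_1}$, $y_i\in\{\pm1\}^{m_2}$), its $g$-fiber is $\mathcal{C}_{\downarrow g}(z)=\mathbb{E}[\mathcal{C}(\mathbf{x},\mathbf{y})\mid g(\mathbf{x}_i,\mathbf{y}_i)=z_i\ \forall i]$ for uniform $\mathbf{x},\mathbf{y}$. For $f:\{\pm1\}^n\to\mathbb{R}$, $L_{1,k}(f)=\sum_{|I|=k}|\hat f(I)|$. $L_{1,k}(g,d,m_1,m_2,n)$ denotes the supremum of $L_{1,k}(\mathcal{C}_{\downarrow g})$ over all such randomized protocols with at most $d$ bits of communication (and analogously for $g'$). *)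

(* Defs.v *)
From HB Require Import structures.
From mathcomp Require Import all_boot all_order all_algebra.
From mathcomp Require Import classical_sets reals.
Set Implicit Arguments. Unset Strict Implicit. Unset Printing Implicit Defensive.
Import Order.TTheory GRing.Theory Num.Theory.
Local Open Scope ring_scope.

(* {±1} encoded by bool: false ↦ +1, true ↦ -1. *)
Definition pm {R : pzRingType} (b : bool) : R := if b then -1 else 1.

Definition cube (m : nat) := {ffun 'I_m -> bool}.

Definition gadget (m1 m2 : nat) := cube m1 -> cube m2 -> bool.

Definition ghat {R : numFieldType} (m1 m2 : nat) (g : gadget m1 m2)
  (S : {set 'I_m1}) (T : {set 'I_m2}) : R :=
  (2 ^+ (m1 + m2))^-1 *
  \sum_(x : cube m1) \sum_(y : cube m2)
     pm (g x y) * (\prod_(j in S) pm (x j)) * (\prod_(j in T) pm (y j)).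

(* Deterministic two-party protocol trees: each internal node is a one-bit
   message sent by Alice (a function of her input) or by Bob (a function of
   his input); the position in the tree encodes the transcript. *)
Inductive proto (X Y : Type) : Type :=
| PLeaf of bool
| PAlice of (X -> bool) & proto X Y & proto X Y
| PBob of (Y -> bool) & proto X Y & proto X Y.

Fixpoint peval (X Y : Type) (p : proto X Y) (x : X) (y : Y) : bool :=
  match p with
  | PLeaf b => b
  | PAlice f p0 p1 => if f x then peval p1 x y else peval p0 x y
  | PBob f p0 p1 => if f y then peval p1 x y else peval p0 x y
  end.

(* communication cost = number of bits on the longest path *)
Fixpoint pdepth (X Y : Type) (p : proto X Y) : nat :=
  match p with
  | PLeaf _ => 0
  | PAlice _ p0 p1 => (maxn (pdepth p0) (pdepth p1)).+1
  | PBob _ p0 p1 => (maxn (pdepth p0) (pdepth p1)).+1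
  end.

(* Randomized protocol: a finitely supported probability distribution over
   deterministic protocols (weights, protocols). *)
Definition rproto (R : Type) (X Y : Type) := seq (R * proto X Y).

Definition rproto_ok (R : numDomainType) (X Y : Type) (d : nat)
  (C : rproto R X Y) : Prop :=
  all (fun w => (0 <= w.1) && (pdepth w.2 <= d)%N) C /\
  \sum_(w <- C) w.1 = 1.

Definition rval {R : numDomainType} (X Y : Type) (C : rproto R X Y)
  (x : X) (y : Y) : R :=
  \sum_(w <- C) w.1 * pm (peval w.2 x y).

Definition blocks (n m : nat) := {ffun 'I_n -> cube m}.

Definition fiber (R : numFieldType) (m1 m2 n : nat) (g : gadget m1 m2)
  (C : rproto R (blocks n m1) (blocks n m2)) (z : cube n) : R :=
  (\sum_(x : blocks n m1) \sum_(y : blocks n m2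
          | [forall i, g (x i) (y i) == z i]) rval C x y)
  / (#|[set xy : blocks n m1 * blocks n m2
          | [forall i, g (xy.1 i) (xy.2 i) == z i]]|)%:R.

Definition fhat (R : numFieldType) (n : nat) (f : cube n -> R)
  (I : {set 'I_n}) : R :=
  (2 ^+ n)^-1 * \sum_(z : cube n) f z * \prod_(i in I) pm (z i).

Definition L1k (R : numFieldType) (n k : nat) (f : cube n -> R) : R :=
  \sum_(I : {set 'I_n} | #|I| == k) `|fhat f I|.

Definition L1k_sup {R : realType} (m1 m2 : nat) (g : gadget m1 m2)
  (d n k : nat) : R :=
  sup [set r : R | exists C : rproto R (blocks n m1) (blocks n m2),
          rproto_ok d C /\ r = L1k k (fiber g C)].

(* Main.v *)
Require Import Defs.
From HB Require Import structures.
From mathcomp Require Import all_boot all_order all_algebra.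
From mathcomp Require Import reals.
From mathcomp Require Import ring lra.
Set Implicit Arguments. Unset Strict Implicit. Unset Printing Implicit Defensive.
Import Order.TTheory GRing.Theory Num.Theory.
Local Open Scope ring_scope.

Section Basic.
Variable R : realType.

Definition chi (m : nat) (S : {set 'I_m}) (a : cube m) : R :=
  \prod_(j in S) pm (a j).

Definition par (m : nat) (S : {set 'I_m}) (a : cube m) : bool :=
  \big[addb/false]_(j in S) a j.

Lemma pm_addb (a b : bool) : pm (a (+) b) = pm a * pm b :> R.
Proof. by case: a; case: b; rewrite /pm /= ?mulr1 ?mul1r ?mulrNN ?mulr1. Qed.

Lemma pm_neg (a : bool) : pm (~~ a) = - pm a :> R.
Proof. by case: a; rewrite /pm /= ?opprK. Qed.

Lemma pm_sq (a : bool) : pm a * pm a = 1 :> R.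
Proof. by case: a; rewrite /pm ?mulrNN mulr1. Qed.

Lemma pm_eq (a b : bool) : ((a == b)%:R : R) = (1 + pm a * pm b) / 2.
Proof.
by case: a; case: b; rewrite /pm /= ?mulrNN ?mulr1 ?mul1r ?mulN1r;
  field.
Qed.

Lemma pm_par m (S : {set 'I_m}) a : pm (par S a) = chi S a.
Proof.
rewrite /par /chi; apply: (big_morph (fun b => pm b : R)) => //.
exact: pm_addb.
Qed.

Definition flip m (j : 'I_m) (a : cube m) : cube m :=
  [ffun l => if l == j then ~~ a l else a l].

Lemma flipK m (j : 'I_m) : involutive (flip j).
Proof.
move=> a; apply/ffunP => l; rewrite !ffunE.
by case: (l == j); rewrite ?negbK.
Qed.

Lemma par_flip m (S : {set 'I_m}) j a : j \in S -> par S (flip j a) = ~~ par S a.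
Proof.
move=> jS; rewrite /par (bigD1 j) //= [in RHS](bigD1 j) //= ffunE eqxx.
rewrite addNb; congr (~~ (_ (+) _)); apply: eq_bigr => l /andP[_ lj].
by rewrite ffunE (negbTE lj).
Qed.

Lemma chi_flip m (S : {set 'I_m}) j a : j \in S -> chi S (flip j a) = - chi S a.
Proof. by move=> jS; rewrite -!pm_par par_flip // pm_neg. Qed.

Lemma sum_chi0 m (S : {set 'I_m}) : S != set0 -> \sum_(a : cube m) chi S a = 0.
Proof.
case/set0Pn => j jS.
have e : \sum_(a : cube m) chi S a = \sum_(a : cube m) chi S (flip j a).
  by rewrite (reindex_inj (can_inj (flipK j))).
have : \sum_(a : cube m) chi S a = - \sum_(a : cube m) chi S a.
  by rewrite {1}e -sumrN; apply: eq_bigr => a _; rewrite chi_flip.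
move/eqP; rewrite -subr_eq0 opprK -mulr2n -mulr_natr mulf_eq0 pnatr_eq0 orbF.
by move/eqP.
Qed.

Lemma card_cube m : #|{: cube m}| = (2 ^ m)%N.
Proof. by rewrite card_ffun card_bool card_ord. Qed.

Lemma sum_cube1 m : \sum_(a : cube m) (1 : R) = 2 ^+ m.
Proof. by rewrite sumr_const card_cube natrX. Qed.

Lemma sum_prod_pair (I A B : finType) (F : I -> A -> B -> R) :
  \sum_(x : {ffun I -> A}) \sum_(y : {ffun I -> B}) \prod_i F i (x i) (y i)
  = \prod_i \sum_a \sum_b F i a b.
Proof.
transitivity (\prod_i \sum_(ab : A * B) F i ab.1 ab.2); last first.
  by apply: eq_bigr => i _; rewrite pair_big.
rewrite bigA_distr_bigA /= pair_big /=.
pose h (xy : {ffun I -> A} * {ffun I -> B}) : {ffun I -> A * B} :=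
  [ffun i => (xy.1 i, xy.2 i)].
pose h' (f : {ffun I -> A * B}) : {ffun I -> A} * {ffun I -> B} :=
  ([ffun i => (f i).1], [ffun i => (f i).2]).
rewrite (reindex h); last first.
  exists h' => [[x y] _ | f _]; rewrite /h /h' /=.
    by congr pair; apply/ffunP => i; rewrite !ffunE.
  by apply/ffunP => i; rewrite !ffunE; case: (f i).
by apply: eq_bigr => -[x y] _; apply: eq_bigr => i _; rewrite ffunE.
Qed.

Lemma sum_prod_single (I A : finType) (F : I -> A -> R) :
  \sum_(x : {ffun I -> A}) \prod_i F i (x i) = \prod_i \sum_a F i a.
Proof. by rewrite bigA_distr_bigA. Qed.

Lemma sum_sets_prod m (f : 'I_m -> R) :
  \sum_(S : {set 'I_m}) \prod_(j in S) f j = \prod_j (1 + f j).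
Proof.
transitivity (\prod_j \sum_(b : bool) (if b then f j else 1)); last first.
  by apply: eq_bigr => j _; rewrite big_bool /= addrC.
rewrite bigA_distr_bigA /=.
pose h (S : {set 'I_m}) : {ffun 'I_m -> bool} := [ffun j => j \in S].
pose h' (b : {ffun 'I_m -> bool}) : {set 'I_m} := [set j | b j].
rewrite (reindex h); last first.
  exists h' => [S _ | b _]; rewrite /h /h'.
    by apply/setP => j; rewrite inE ffunE.
  by apply/ffunP => j; rewrite ffunE inE.
apply: eq_bigr => S _; rewrite big_mkcond /=; apply: eq_bigr => j _.
by rewrite ffunE.
Qed.

Lemma chi_orth m (a a' : cube m) :
  \sum_(S : {set 'I_m}) chi S a * chi S a' = (a == a')%:R * 2 ^+ m.
Proof.
under eq_bigr => S _ do rewrite /chi -big_split /=.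
rewrite sum_sets_prod; have [->|neq] := eqVneq a a'.
  rewrite mul1r (eq_bigr (fun _ => 2)) ?prodr_const ?card_ord // => j _.
  by rewrite pm_sq.
rewrite mul0r; have [j ja] : exists j, a j != a' j.
  by apply/existsP; move: neq; apply: contraR; rewrite negb_exists => /forallP H;
    apply/eqP/ffunP => j; apply/eqP; move: (H j); rewrite negbK.
rewrite (bigD1 j) //=; move: ja; case: (a j); case: (a' j) => // _;
  by rewrite /pm ?mulrN ?mulNr mulr1 subrr mul0r.
Qed.

End Basic.

Section Four.
Variable R : realType.

Lemma sum_ind (T : finType) (a : T) (F : T -> R) :
  \sum_x (x == a)%:R * F x = F a.
Proof.
rewrite (bigD1 a) //= eqxx mul1r big1 ?addr0 // => x /negbTE ->.
by rewrite mul0r.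
Qed.

Lemma exch4 (A B C D : finType) (f : A -> B -> C -> D -> R) :
  \sum_a \sum_b \sum_c \sum_d f a b c d = \sum_c \sum_d \sum_a \sum_b f a b c d.
Proof.
transitivity (\sum_a \sum_c \sum_d \sum_b f a b c d).
  apply: eq_bigr => a _; rewrite exchange_big; apply: eq_bigr => c _.
  by rewrite exchange_big.
rewrite exchange_big; apply: eq_bigr => c _; rewrite exchange_big.
by apply: eq_bigr => d _; rewrite exchange_big.
Qed.

Variables (m1 m2 : nat) (g : gadget m1 m2).
Definition pairT := ({set 'I_m1} * {set 'I_m2})%type.
Definition gh (p : pairT) : R := ghat g p.1 p.2.

Lemma ghatE S T : ghat (R := R) g S T = (2 ^+ (m1 + m2))^-1 *
  \sum_(x : cube m1) \sum_(y : cube m2) pm (g x y) * chi R S x * chi R T y.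
Proof. by []. Qed.

Lemma g_inv a b :
  pm (g a b) = \sum_(p : pairT) gh p * chi R p.1 a * chi R p.2 b.
Proof.
rewrite /gh -(pair_big xpredT xpredT (fun S T => ghat g S T * chi R S a * chi R T b)) /=.
transitivity (\sum_S \sum_T (2 ^+ (m1 + m2))^-1 *
  \sum_(x : cube m1) \sum_(y : cube m2)
   (pm (g x y) * (chi R S x * chi R S a) * (chi R T y * chi R T b)) : R);
  last first.
  apply: eq_bigr => S _; apply: eq_bigr => T _.
  rewrite /gh /= ghatE -!mulrA; congr (_ * _).
  rewrite mulr_suml; apply: eq_bigr => x _.
  rewrite mulr_suml; apply: eq_bigr => y _. ring.
under eq_bigr => S _ do rewrite -mulr_sumr.
rewrite -mulr_sumr.
rewrite exch4.
transitivity ((2 ^+ (m1 + m2))^-1 * \sum_(x : cube m1) \sum_(y : cube m2)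
   pm (g x y) * (\sum_S chi R S x * chi R S a) * (\sum_T chi R T y * chi R T b) : R);
  last first.
  congr (_ * _); apply: eq_bigr => x _; apply: eq_bigr => y _.
  rewrite -mulrA mulr_suml mulr_sumr; apply: eq_bigr => S _.
  rewrite mulr_sumr mulr_sumr; apply: eq_bigr => T _; ring.
under eq_bigr => x _ do under eq_bigr => y _ do rewrite !chi_orth.
transitivity ((2 ^+ (m1 + m2))^-1 * \sum_(x : cube m1) (x == a)%:R *
   \sum_(y : cube m2) (y == b)%:R * (pm (g x y) * 2 ^+ m1 * 2 ^+ m2) : R);
  last first.
  congr (_ * _); apply: eq_bigr => x _; rewrite mulr_sumr.
  apply: eq_bigr => y _; ring.
rewrite sum_ind sum_ind exprD; field.
by rewrite !expf_neq0 // pnatr_eq0.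
Qed.

Lemma sum_cube2 : \sum_(x : cube m1) \sum_(y : cube m2) (1 : R) = 2 ^+ (m1 + m2).
Proof.
under eq_bigr => x _ do rewrite sum_cube1.
by rewrite sumr_const card_ffun card_bool card_ord -(mulr_natr (2 ^+ m2)) natrX exprD mulrC.
Qed.

Lemma parseval : \sum_(p : pairT) gh p ^+ 2 = 1.
Proof.
transitivity (\sum_(p : pairT) gh p * ((2 ^+ (m1 + m2))^-1 *
  \sum_(x : cube m1) \sum_(y : cube m2) pm (g x y) * chi R p.1 x * chi R p.2 y)).
  by apply: eq_bigr => p _; rewrite expr2.
transitivity ((2 ^+ (m1 + m2))^-1 * \sum_(x : cube m1) \sum_(y : cube m2)
   pm (g x y) * \sum_(p : pairT) gh p * chi R p.1 x * chi R p.2 y).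
  under eq_bigr => p _ do rewrite mulrCA mulr_sumr.
  rewrite -mulr_sumr; congr (_ * _).
  rewrite exchange_big /=; apply: eq_bigr => x _.
  under eq_bigr => p _ do rewrite mulr_sumr.
  rewrite exchange_big /=; apply: eq_bigr => y _.
  rewrite mulr_sumr; apply: eq_bigr => p _; ring.
under eq_bigr => x _ do under eq_bigr => y _ do rewrite -g_inv pm_sq.
by rewrite sum_cube2 mulVf // expf_neq0 // pnatr_eq0.
Qed.

End Four.

Section Fib.
Variable R : realType.

Lemma forall_prod (I : finType) (P : pred I) :
  ([forall i, P i]%:R : R) = \prod_i (P i)%:R.
Proof.
case: (boolP [forall i, P i]) => [/forallP H | ].
  by rewrite big1 // => i _; rewrite H.
rewrite negb_forall => /existsP [i /negbTE Pi].
by rewrite (bigD1 i) //= Pi mul0r.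
Qed.

Lemma sum2_affine (A B : finType) (u v : R) (f : A -> B -> R) :
  \sum_(a : A) \sum_(b : B) (u + v * f a b) = \sum_(a : A) \sum_(b : B) u + v * \sum_a \sum_b f a b.
Proof.
rewrite mulr_sumr -big_split; apply: eq_bigr => a _ /=.
by rewrite mulr_sumr -big_split.
Qed.

Variables (m1 m2 : nat) (g : gadget m1 m2).
Hypothesis g00 : ghat (R := R) g set0 set0 = 0.

Lemma sum_g_eq (c : bool) :
  \sum_(a : cube m1) \sum_(b : cube m2) ((g a b == c)%:R : R) = 2 ^+ (m1 + m2) / 2.
Proof.
under eq_bigr => a _ do under eq_bigr => b _ do rewrite pm_eq.
transitivity (\sum_(a : cube m1) \sum_(b : cube m2) (2^-1 + (pm c / 2) * (pm (g a b) * chi R set0 a * chi R set0 b)) : R).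
  apply: eq_bigr => a _; apply: eq_bigr => b _.
  rewrite /chi !big_set0 !mulr1; by field.
rewrite (sum2_affine _ _ (fun a b => pm (g a b) * chi R set0 a * chi R set0 b)).
move: g00; rewrite ghatE => /eqP; rewrite mulf_eq0 invr_eq0 expf_eq0 pnatr_eq0 andbF /=.
move/eqP ->; rewrite mulr0 addr0 -sum_cube2 mulr_suml; apply: eq_bigr => a _.
by rewrite mulr_suml; apply: eq_bigr => b _; rewrite mul1r.
Qed.

Variable n : nat.
Definition gz (x : blocks n m1) (y : blocks n m2) : cube n := [ffun i => g (x i) (y i)].

Lemma count_fiber (z : cube n) :
  ((#|[set xy : blocks n m1 * blocks n m2
          | [forall i, g (xy.1 i) (xy.2 i) == z i]]|)%:R : R)
  = (2 ^+ (m1 + m2) / 2) ^+ n.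
Proof.
transitivity (\sum_(x : blocks n m1) \sum_(y : blocks n m2)
   ([forall i, g (x i) (y i) == z i]%:R : R)).
  rewrite -sum1_card natr_sum big_mkcond pair_bigA /=.
  apply: eq_bigr => -[x y] _; rewrite inE /=.
  by case: ifP.
under eq_bigr => x _ do under eq_bigr => y _ do rewrite forall_prod.
rewrite (sum_prod_pair (fun i a b => ((g a b == z i)%:R : R))).
under eq_bigr => i _ do rewrite sum_g_eq.
by rewrite prodr_const card_ord.
Qed.

Lemma fiber_fhat (C : rproto R (blocks n m1) (blocks n m2)) (I : {set 'I_n}) :
  fhat (fiber g C) I = (2 ^+ (n * (m1 + m2)))^-1 *
    \sum_(x : blocks n m1) \sum_(y : blocks n m2)
        rval C x y * \prod_(i in I) pm (g (x i) (y i)).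
Proof.
rewrite /fhat /fiber.
under eq_bigr => z _ do rewrite count_fiber.
set K := (2 ^+ (m1 + m2) / 2) ^+ n : R.
transitivity ((2 ^+ n)^-1 * K^-1 * \sum_z \sum_(x : blocks n m1) \sum_(y : blocks n m2)
   (z == gz x y)%:R * (rval C x y * \prod_(i in I) pm (z i))).
  rewrite -mulrA; congr (_ * _); rewrite mulr_sumr; apply: eq_bigr => z _.
  rewrite mulrAC mulrC; congr (_ * _).
  rewrite mulr_suml; apply: eq_bigr => x _.
  rewrite big_mkcond /= mulr_suml; apply: eq_bigr => y _.
  have -> : [forall i, g (x i) (y i) == z i] = (z == gz x y).
    apply/forallP/eqP => [H | ->]; last by move=> i; rewrite ffunE.
    by apply/ffunP => i; rewrite ffunE; apply/esym/eqP.
  by case: (z == gz x y); rewrite ?mul1r ?mul0r.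
rewrite exchange_big /=.
under eq_bigr => x _ do rewrite exchange_big /=.
under eq_bigr => x _ do under eq_bigr => y _ do rewrite (sum_ind (gz x y)
   (fun z => rval C x y * \prod_(i in I) pm (z i))).
congr (_ * _).
  rewrite /K -invfM -exprMn mulrCA divff ?pnatr_eq0 // mulr1 -exprM mulnC //.
apply: eq_bigr => x _; apply: eq_bigr => y _; congr (_ * _).
by apply: eq_bigr => i _; rewrite ffunE.
Qed.

End Fib.

Fixpoint pmapp (X Y X' Y' : Type) (al : X' -> X) (be : Y' -> Y) (p : proto X Y)
  : proto X' Y' :=
  match p with
  | PLeaf b => PLeaf X' Y' b
  | PAlice f p0 p1 => PAlice (fun x => f (al x)) (pmapp al be p0) (pmapp al be p1)
  | PBob f p0 p1 => PBob (fun y => f (be y)) (pmapp al be p0) (pmapp al be p1)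
  end.

Lemma peval_pmapp X Y X' Y' (al : X' -> X) (be : Y' -> Y) p x y :
  peval (pmapp al be p) x y = peval p (al x) (be y).
Proof. by elim: p => [b|f p0 IH0 p1 IH1|f p0 IH0 p1 IH1] //=; rewrite IH0 IH1. Qed.

Lemma pdepth_pmapp X Y X' Y' (al : X' -> X) (be : Y' -> Y) p :
  pdepth (pmapp al be p) = pdepth p.
Proof. by elim: p => [b|f p0 IH0 p1 IH1|f p0 IH0 p1 IH1] //=; rewrite IH0 IH1. Qed.

Section Mix.
Variable R : realType.
Variables (X Y X' Y' : Type) (Th : finType) (al : Th -> X' -> X) (be : Th -> Y' -> Y).

Definition mix (C : rproto R X Y) : rproto R X' Y' :=
  [seq (w.1 / #|Th|%:R, pmapp (al t) (be t) w.2) | w <- C, t <- enum Th].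

Lemma rval_mix C x y :
  rval (mix C) x y = (#|Th|%:R)^-1 * \sum_t rval C (al t x) (be t y).
Proof.
rewrite /rval /mix big_allpairs_dep /=.
rewrite mulr_sumr exchange_big /= big_enum /=.
apply: eq_bigr => t _; rewrite mulr_sumr; apply: eq_bigr => w _.
by rewrite peval_pmapp mulrCA mulrA.
Qed.

Lemma mix_ok d C : (0 < #|Th|)%N -> rproto_ok d C -> rproto_ok d (mix C).
Proof.
move=> Th0 [Hall Hsum]; split.
  rewrite /mix; elim: C Hall {Hsum} => [|w C IH] //= /andP [/andP [H1 H2] HC].
  rewrite all_cat IH // andbT all_map.
  apply/allP => t _ /=.
  by rewrite pdepth_pmapp H2 andbT divr_ge0 // ler0n.
rewrite -[RHS]Hsum /mix big_allpairs_dep /=; apply: eq_bigr => w _.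
rewrite big_enum /= sumr_const -(mulr_natr (w.1 / _)) -mulrA mulVf ?mulr1 //.
by rewrite pnatr_eq0 -lt0n.
Qed.

End Mix.

Definition flipo m (o : option 'I_m) (a : cube m) : cube m :=
  if o is Some j then flip j a else a.

Lemma flipoK m (o : option 'I_m) : involutive (flipo o).
Proof. by case: o => [j|] a //=; rewrite flipK. Qed.

Definition enc m (S : {set 'I_m}) (b : bool) (t : cube m) : cube m :=
  if b (+) par S t then flipo [pick j in S] t else t.

Lemma par_enc m (S : {set 'I_m}) b t : S != set0 -> par S (enc S b t) = b.
Proof.
move=> /set0Pn [j0 j0S]; rewrite /enc.
case: pickP => [j jS | /(_ j0)]; last by rewrite j0S.
case: b; case E: (par S t) => /=; rewrite ?par_flip ?E //.
Qed.

Definition encB n m (s : 'I_n -> {set 'I_m}) (u : cube n) (th : blocks n m)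
  : blocks n m := [ffun i => enc (s i) (u i) (th i)].

Definition flipB n m (s : 'I_n -> {set 'I_m}) (r : cube n) (th : blocks n m)
  : blocks n m := [ffun i => if r i then flipo [pick j in s i] (th i) else th i].

Lemma flipBK n m s r : involutive (@flipB n m s r).
Proof.
move=> th; apply/ffunP => i; rewrite !ffunE.
by case: (r i); rewrite ?flipoK.
Qed.

Definition xorf n (u c : cube n) : cube n := [ffun i => u i (+) c i].

Lemma xorfK n (c : cube n) : involutive (fun u : cube n => xorf u c).
Proof. by move=> u; apply/ffunP => i; rewrite !ffunE addbK. Qed.

Section Step2.
Variable R : realType.

Lemma card_cubeR n : (#|{: cube n}|%:R : R) = 2 ^+ n.
Proof. by rewrite card_cube natrX. Qed.

Lemma step2 n m (s : 'I_n -> {set 'I_m}) (K : blocks n m -> R) :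
  \sum_(th : blocks n m) \sum_(u : cube n) K (encB s u th) = 2 ^+ n * \sum_x K x.
Proof.
transitivity (\sum_(th : blocks n m) \sum_(r : cube n) K (flipB s r th)).
  apply: eq_bigr => th _.
  pose c : cube n := [ffun i => par (s i) (th i)].
  rewrite [RHS](reindex_inj (can_inj (xorfK c))) /=.
  apply: eq_bigr => u _; congr K; apply/ffunP => i; rewrite !ffunE /enc.
  by case: (u i (+) _).
rewrite exchange_big /=.
under eq_bigr => r _ do rewrite (reindex_inj (can_inj (flipBK s r))) /= .
under eq_bigr => r _ do under eq_bigr => th _ do rewrite flipBK.
by rewrite sumr_const -(mulr_natl (\sum_x K x)) -card_cubeR.
Qed.

End Step2.

Section Step1.
Variable R : realType.

Lemma sum2_split (A B : finType) (f h : A -> B -> R) :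
  \sum_a \sum_b (f a b + h a b) = \sum_a \sum_b f a b + \sum_a \sum_b h a b.
Proof. by rewrite -big_split; apply: eq_bigr => a _; rewrite big_split. Qed.

Lemma sum2_scale (A B : finType) (k : R) (f : A -> B -> R) :
  \sum_a \sum_b (k * f a b) = k * \sum_a \sum_b f a b.
Proof. by rewrite mulr_sumr; apply: eq_bigr => a _; rewrite mulr_sumr. Qed.

Lemma ind_par m (S : {set 'I_m}) c a :
  ((c == par S a)%:R : R) = (1 + pm c * chi R S a) / 2.
Proof. by rewrite pm_eq pm_par. Qed.

Lemma sum_half m (S : {set 'I_m}) (c : bool) : S != set0 ->
  \sum_(a : cube m) ((c == par S a)%:R : R) = 2 ^+ m / 2.
Proof.
move=> S0; under eq_bigr => a _ do rewrite ind_par mulrDl.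
by rewrite big_split /= -mulr_suml -mulr_suml -mulr_sumr sum_chi0 // mulr0 mul0r
  addr0 sum_cube1.
Qed.

Variables (m1 m2 : nat) (g : gadget m1 m2).

Lemma sum_ghat S T : \sum_(a : cube m1) \sum_(b : cube m2)
   pm (g a b) * chi R S a * chi R T b = 2 ^+ (m1 + m2) * ghat g S T.
Proof.
by rewrite ghatE mulrA mulfV ?mul1r // expf_neq0 // pnatr_eq0.
Qed.

Lemma G_J S T (c e : bool) :
  ghat (R := R) g set0 set0 = 0 -> ghat (R := R) g S set0 = 0 ->
  ghat (R := R) g set0 T = 0 ->
  \sum_(a : cube m1) \sum_(b : cube m2)
     (c == par S a)%:R * (e == par T b)%:R * pm (g a b)
  = 2 ^+ (m1 + m2) / 4 * (pm c * pm e * ghat (R := R) g S T).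
Proof.
move=> h00 hS0 h0T.
transitivity (\sum_(a : cube m1) \sum_(b : cube m2)
   (4^-1 * (pm (g a b) * chi R set0 a * chi R set0 b)
   + (pm c / 4 * (pm (g a b) * chi R S a * chi R set0 b)
   + (pm e / 4 * (pm (g a b) * chi R set0 a * chi R T b)
   + pm c * pm e / 4 * (pm (g a b) * chi R S a * chi R T b))))).
  apply: eq_bigr => a _; apply: eq_bigr => b _.
  rewrite !ind_par /chi !big_set0; by field.
rewrite !sum2_split !sum2_scale !sum_ghat h00 hS0 h0T; by field.
Qed.

Lemma G_notJ S T (c e : bool) : S != set0 -> T != set0 ->
  \sum_(a : cube m1) \sum_(b : cube m2)
     ((c == par S a)%:R * (e == par T b)%:R * 1 : R)
  = 2 ^+ (m1 + m2) / 4.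
Proof.
move=> S0 T0.
under eq_bigr => a _ do under eq_bigr => b _ do rewrite mulr1.
under eq_bigr => a _ do rewrite -mulr_sumr.
rewrite -mulr_suml.
rewrite (sum_half c S0) (sum_half e T0) exprD; by field.
Qed.

Lemma sum_ind2 (A B : finType) (a : A) (b : B) (F : A -> B -> R) :
  \sum_u \sum_v (u == a)%:R * (v == b)%:R * F u v = F a b.
Proof.
rewrite -(sum_ind a (fun u => F u b)); apply: eq_bigr => u _.
rewrite -(sum_ind b (fun v => F u v)) mulr_sumr; apply: eq_bigr => v _.
by rewrite mulrA.
Qed.

Lemma eq_ffun_prod n (u : cube n) (f : 'I_n -> bool) :
  ((u == [ffun i => f i])%:R : R) = \prod_i (u i == f i)%:R.
Proof.
transitivity ([forall i, u i == f i]%:R : R); last by rewrite forall_prod.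
suff -> : (u == [ffun i => f i]) = [forall i, u i == f i] by [].
apply/idP/idP.
  by move/eqP => ->; apply/fintype.forallP => i; rewrite ffunE.
by move/fintype.forallP => H; apply/eqP/ffunP => i; rewrite ffunE; apply/eqP.
Qed.

Lemma step1 n S T : S != set0 -> T != set0 ->
  ghat (R := R) g set0 set0 = 0 -> ghat (R := R) g S set0 = 0 ->
  ghat (R := R) g set0 T = 0 ->
  forall (K : cube n -> cube n -> R) (J : {set 'I_n}),
  \sum_(x : blocks n m1) \sum_(y : blocks n m2)
     K [ffun i => par S (x i)] [ffun i => par T (y i)] *
     \prod_(i in J) pm (g (x i) (y i))
  = (2 ^+ (m1 + m2) / 4) ^+ n * ghat (R := R) g S T ^+ #|J| *
     \sum_(u : cube n) \sum_(v : cube n) K u v * \prod_(i in J) (pm (u i) * pm (v i)).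
Proof.
move=> S0 T0 h00 hS0 h0T K J.
pose F (u v : cube n) i (a : cube m1) (b : cube m2) : R :=
  (u i == par S a)%:R * (v i == par T b)%:R * (if i \in J then pm (g a b) else 1).
transitivity (\sum_(x : blocks n m1) \sum_(y : blocks n m2) \sum_(u : cube n) \sum_(v : cube n)
   K u v * \prod_i F u v i (x i) (y i)).
  apply: eq_bigr => x _; apply: eq_bigr => y _.
  rewrite -(sum_ind2 [ffun i => par S (x i)] [ffun i => par T (y i)]
    (fun u v => K u v * \prod_(i in J) pm (g (x i) (y i)))).
  apply: eq_bigr => u _; apply: eq_bigr => v _.
  rewrite /F !big_split /= !eq_ffun_prod -big_mkcond /=; ring.
rewrite exch4.
under eq_bigr => u _ do under eq_bigr => v _ do rewrite sum2_scale.
under eq_bigr => u _ do under eq_bigr => v _ do rewrite sum_prod_pair.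
rewrite -sum2_scale; apply: eq_bigr => u _; apply: eq_bigr => v _.
rewrite (eq_bigr (fun i => 2 ^+ (m1 + m2) / 4 *
   (if i \in J then pm (u i) * pm (v i) * ghat (R := R) g S T else 1))); last first.
  move=> i _; rewrite /F; case: (i \in J).
    by rewrite G_J.
  by rewrite G_notJ // mulr1.
rewrite big_split /= prodr_const card_ord -big_mkcond /= big_split /= prodr_const.
ring.
Qed.

End Step1.

Section DirA.
Variable R : realType.
Variables (m1 m2 : nat) (g : gadget m1 m2) (n : nat).

Definition Wg : R := \sum_(q : pairT m1 m2) `|gh R g q|.
Hypothesis W0 : 0 < Wg.

Definition ptau (tau : {ffun 'I_n -> pairT m1 m2}) : R :=
  \prod_i (`|gh R g (tau i)| / Wg).

Definition Lam (H : blocks n m1 -> blocks n m2 -> R) (tau : {ffun 'I_n -> pairT m1 m2})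
  (I : {set 'I_n}) : R :=
  \sum_(x : blocks n m1) \sum_(y : blocks n m2)
     H x y * \prod_(i in I) (chi R (tau i).1 (x i) * chi R (tau i).2 (y i)).

Lemma ptau_ge0 tau : 0 <= ptau tau.
Proof. by apply: prodr_ge0 => i _; rewrite divr_ge0 // ltW. Qed.

Lemma ptau_sum : \sum_tau ptau tau = 1.
Proof.
have /= E := sum_prod_single (fun (i : 'I_n) (q : pairT m1 m2) => `|gh R g q| / Wg).
rewrite /ptau E.
rewrite big1 // => i _; by rewrite -mulr_suml mulfV // gt_eqF.
Qed.

Lemma dirA (H : blocks n m1 -> blocks n m2 -> R) (I : {set 'I_n}) :
  `|\sum_(x : blocks n m1) \sum_(y : blocks n m2)
      H x y * \prod_(i in I) pm (g (x i) (y i))|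
  <= Wg ^+ #|I| * \sum_tau ptau tau * `|Lam H tau I|.
Proof.
pose c (tau : {ffun 'I_n -> pairT m1 m2}) : R :=
  \prod_i (if i \in I then gh R g (tau i) else `|gh R g (tau i)| / Wg).
have E : forall (x : blocks n m1) (y : blocks n m2), \prod_(i in I) pm (g (x i) (y i)) =
   \sum_tau c tau * \prod_(i in I) (chi R (tau i).1 (x i) * chi R (tau i).2 (y i)).
  move=> x y.
  pose F i (q : pairT m1 m2) : R := if i \in I then gh R g q * (chi R q.1 (x i) * chi R q.2 (y i))
       else `|gh R g q| / Wg.
  transitivity (\prod_i \sum_q F i q).
    rewrite big_mkcond /=; apply: eq_bigr => i _; rewrite /F.
    case: (i \in I); last by rewrite -mulr_suml mulfV // gt_eqF.
    by rewrite g_inv; apply: eq_bigr => q _; rewrite mulrA.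
  rewrite -sum_prod_single; apply: eq_bigr => tau _.
  rewrite /c /= [X in _ * X]big_mkcond -big_split /=; apply: eq_bigr => i _.
  by rewrite /F; case: (i \in I); rewrite ?mulr1.
have -> : \sum_(x : blocks n m1) \sum_(y : blocks n m2)
      H x y * \prod_(i in I) pm (g (x i) (y i)) = \sum_tau c tau * Lam H tau I.
  rewrite /Lam.
  under eq_bigr => x _ do under eq_bigr => y _ do rewrite E mulr_sumr.
  under eq_bigr => x _ do rewrite exchange_big /=.
  rewrite exchange_big /=; apply: eq_bigr => tau _.
  rewrite mulr_sumr; apply: eq_bigr => x _.
  rewrite mulr_sumr; apply: eq_bigr => y _; ring.
apply: le_trans (ler_norm_sum _ _ _) _.
rewrite mulr_sumr; apply: ler_sum => tau _.
rewrite normrM mulrA; apply: ler_wpM2r => //.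
rewrite /c /ptau normr_prod.
have -> : Wg ^+ #|I| = \prod_i (if i \in I then Wg else 1).
  by rewrite -big_mkcond prodr_const.
rewrite -big_split /= le_eqVlt; apply/orP; left; apply/eqP.
apply: eq_bigr => i _; case: (i \in I).
  by rewrite mulrC divfK // gt_eqF.
by rewrite mul1r ger0_norm // divr_ge0 // ltW.
Qed.

End DirA.

Section Key.
Variable R : realType.
Variables (m1 m2 m1' m2' n : nat) (g' : gadget m1' m2').
Variables (S' : {set 'I_m1'}) (T' : {set 'I_m2'}).
Hypotheses (S'0 : S' != set0) (T'0 : T' != set0).
Hypotheses (h00 : ghat (R := R) g' set0 set0 = 0) (hS0 : ghat (R := R) g' S' set0 = 0)
  (h0T : ghat (R := R) g' set0 T' = 0).

Definition ThT := (blocks n m1 * blocks n m2)%type.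

Lemma card_blocksR m : (#|{: blocks n m}|%:R : R) = 2 ^+ (n * m).
Proof. by rewrite card_ffun card_cube card_ord !natrX -exprM mulnC. Qed.

Lemma card_ThR : (#|{: ThT}|%:R : R) = 2 ^+ (n * (m1 + m2)).
Proof. by rewrite card_prod natrM !card_blocksR -exprD mulnDr. Qed.

Variable tau : {ffun 'I_n -> pairT m1 m2}.
Hypothesis tau0 : forall i, ((tau i).1 != set0) && ((tau i).2 != set0).

Definition alT (th : ThT) (x : blocks n m1') : blocks n m1 :=
  encB (fun i => (tau i).1) [ffun i => par S' (x i)] th.1.
Definition beT (th : ThT) (y : blocks n m2') : blocks n m2 :=
  encB (fun i => (tau i).2) [ffun i => par T' (y i)] th.2.

Lemma key (C : rproto R (blocks n m1) (blocks n m2)) (J : {set 'I_n}) :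
  fhat (fiber g' (mix alT beT C)) J =
  (2 ^+ (n * (m1 + m2)))^-1 * ghat (R := R) g' S' T' ^+ #|J| * Lam (rval C) tau J.
Proof.
rewrite fiber_fhat //.
under eq_bigr => x _ do under eq_bigr => y _ do rewrite rval_mix.
pose K (u v : cube n) : R := (#|{: ThT}|%:R)^-1 * \sum_(th : ThT)
   rval C (encB (fun i => (tau i).1) u th.1) (encB (fun i => (tau i).2) v th.2).
rewrite (step1 _ _ _ _ _ K) //.
pose H' (x : blocks n m1) (y : blocks n m2) : R :=
  rval C x y * \prod_(i in J) (chi R (tau i).1 (x i) * chi R (tau i).2 (y i)).
have -> : \sum_u \sum_v K u v * \prod_(i in J) (pm (u i) * pm (v i)) =
   (#|{: ThT}|%:R)^-1 * \sum_(t1 : blocks n m1) \sum_(u : cube n)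
      \sum_(t2 : blocks n m2) \sum_(v : cube n)
        H' (encB (fun i => (tau i).1) u t1) (encB (fun i => (tau i).2) v t2).
  transitivity (\sum_(u : cube n) \sum_(v : cube n) (#|{: ThT}|%:R)^-1 *
    \sum_(t1 : blocks n m1) \sum_(t2 : blocks n m2)
        H' (encB (fun i => (tau i).1) u t1) (encB (fun i => (tau i).2) v t2)).
    apply: eq_bigr => u _; apply: eq_bigr => v _.
    rewrite /K -mulrA; congr (_ * _).
    rewrite [in RHS]pair_bigA /= mulr_suml; apply: eq_bigr => th _.
    rewrite /H'; congr (_ * _); apply: eq_bigr => i _.
    have /andP [t1 t2] := tau0 i.
    by rewrite !ffunE -!pm_par !par_enc.
  rewrite sum2_scale; congr (_ * _).
  rewrite exch4; apply: eq_bigr => t1 _; exact: exchange_big.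
under eq_bigr => t1 _ do under eq_bigr => u _ do
  rewrite (step2 (fun i => (tau i).2)
     (fun y => H' (encB (fun i => (tau i).1) u t1) y)).
under eq_bigr => t1 _ do rewrite -mulr_sumr.
rewrite -mulr_sumr (step2 (fun i => (tau i).1) (fun x => \sum_y H' x y)).
rewrite card_ThR.
have e1 : (2:R) ^+ (n * (m1' + m2')) = (2 ^+ (m1' + m2')) ^+ n by rewrite mulnC exprM.
have e4 : (4:R) ^+ n = 2 ^+ n * 2 ^+ n by rewrite -exprMn; congr (_ ^+ n); ring.
rewrite e1 exprMn exprVn e4 /Lam -/H'.
have n2 : (2:R) != 0 by rewrite pnatr_eq0.
field; rewrite ?expf_neq0 //.
Qed.

End Key.

Section Aux.
Variable R : realType.

Lemma ex_max (I : finType) (i0 : I) (F : I -> R) : exists j, forall i, F i <= F j.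
Proof.
case: (@arg_maxP _ _ _ i0 xpredT F) => // j _ H; exists j => i; exact: H.
Qed.

Lemma cs (I : finType) (a : I -> R) :
  (\sum_i a i) ^+ 2 <= #|I|%:R * \sum_i a i ^+ 2.
Proof.
have H : \sum_(i : I) \sum_(j : I) (a i - a j) ^+ 2 =
   2 * (#|I|%:R * \sum_i a i ^+ 2 - (\sum_i a i) ^+ 2).
  transitivity (\sum_(i : I) \sum_(j : I) (a i ^+ 2 + (a j ^+ 2 + (-2) * (a i * a j)))).
    by apply: eq_bigr => i _; apply: eq_bigr => j _; ring.
  rewrite !sum2_split sum2_scale.
  have -> : \sum_(i : I) \sum_(j : I) a i ^+ 2 = #|I|%:R * \sum_i a i ^+ 2.
    by rewrite mulr_sumr; apply: eq_bigr => i _; rewrite sumr_const mulr_natl.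
  have -> : \sum_(i : I) \sum_(j : I) a j ^+ 2 = #|I|%:R * \sum_i a i ^+ 2.
    by rewrite sumr_const mulr_natl.
  have -> : \sum_(i : I) \sum_(j : I) (a i * a j) = (\sum_i a i) ^+ 2.
    by rewrite expr2 mulr_suml; apply: eq_bigr => i _; rewrite mulr_sumr.
  ring.
have : 0 <= \sum_(i : I) \sum_(j : I) (a i - a j) ^+ 2.
  by apply: sumr_ge0 => i _; apply: sumr_ge0 => j _; apply: sqr_ge0.
rewrite H pmulr_rge0 ?ltr0n // subr_ge0 //.
Qed.

Lemma card_setsI m : #|{: {set 'I_m}}| = (2 ^ m)%N.
Proof. by rewrite -cardsT -powersetT card_powerset cardsT card_ord. Qed.

Variables (m1 m2 : nat) (g : gadget m1 m2).

Lemma W_pos : 0 < Wg R g.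
Proof.
have W0 : 0 <= Wg R g by apply: sumr_ge0 => q _; exact: normr_ge0.
rewrite lt0r W0 andbT; apply/eqP => /psumr_eq0P H'.
have H : forall q, `|gh R g q| = 0 by move=> q; apply: H' => // ? _; exact: normr_ge0.
have := g_inv R g [ffun => false] [ffun => false].
rewrite big1 => [|q _]; last first.
  by have /normr0P/eqP -> := H q; rewrite !mul0r.
by case: (g _ _); rewrite /pm => /eqP; rewrite ?oppr_eq0 oner_eq0.
Qed.

Lemma card_pairR : (#|{: pairT m1 m2}|%:R : R) = 2 ^+ (m1 + m2).
Proof. by rewrite card_prod !card_setsI natrM !natrX exprD. Qed.

Lemma W_sq : Wg R g ^+ 2 <= 2 ^+ (m1 + m2).
Proof.
apply: le_trans (cs _) _.
rewrite card_pairR.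
rewrite (eq_bigr (fun q => gh R g q ^+ 2)); last by move=> q _; rewrite real_normK // num_real.
by rewrite parseval mulr1.
Qed.

End Aux.

Section Bounds.
Variable R : realType.

Lemma rval_bound X Y d (C : rproto R X Y) x y : rproto_ok d C -> `|rval C x y| <= 1.
Proof.
case=> Hall Hsum; rewrite -Hsum /rval.
apply: le_trans (ler_norm_sum _ _ _) _.
elim: C Hall {Hsum} => [|w C IH] /=; first by rewrite !big_nil.
case/andP => /andP [w0 _] HC; rewrite !big_cons; apply: lerD; last exact: IH.
by rewrite normrM ger0_norm //; case: (peval _ _ _); rewrite /pm ?normrN normr1 mulr1.
Qed.

Variables (m1 m2 n : nat) (g : gadget m1 m2).
Hypothesis g00 : ghat (R := R) g set0 set0 = 0.

Lemma sum_blocks2 : \sum_(x : blocks n m1) \sum_(y : blocks n m2) (1 : R)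
   = 2 ^+ (n * (m1 + m2)).
Proof.
under eq_bigr => x _ do rewrite sumr_const.
rewrite sumr_const -mulrnA -(card_ThR R m1 m2 n) card_prod mulnC.
by [].
Qed.

Lemma fhat_bound d (C : rproto R (blocks n m1) (blocks n m2)) I :
  rproto_ok d C -> `|fhat (fiber g C) I| <= 1.
Proof.
move=> okC; rewrite fiber_fhat // normrM ger0_norm ?invr_ge0 ?exprn_ge0 ?ler0n //.
rewrite ler_pdivrMl ?exprn_gt0 ?ltr0n // mulr1 -sum_blocks2.
apply: le_trans (ler_norm_sum _ _ _) _; apply: ler_sum => x _.
apply: le_trans (ler_norm_sum _ _ _) _; apply: ler_sum => y _.
rewrite normrM normr_prod (eq_bigr (fun _ => 1)); last first.
  by move=> i _; case: (g _ _); rewrite /pm ?normrN normr1.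
by rewrite big1_eq mulr1 (rval_bound _ _ okC).
Qed.

Lemma L1k_bound d (C : rproto R (blocks n m1) (blocks n m2)) k :
  rproto_ok d C -> L1k k (fiber g C) <= #|{: {set 'I_n}}|%:R.
Proof.
move=> okC; rewrite /L1k; apply: le_trans (_ : _ <= \sum_(I : {set 'I_n}) 1) _.
  rewrite [X in _ <= X](bigID (fun I : {set 'I_n} => #|I| == k)) /= -[X in X <= _]addr0.
  apply: lerD; first by apply: ler_sum => I _; exact: fhat_bound okC.
  by apply: sumr_ge0 => ? _; exact: ler01.
by rewrite sumr_const.
Qed.

Lemma L1k_ge0 (f : cube n -> R) k : 0 <= L1k k f.
Proof. by apply: sumr_ge0 => I _; exact: normr_ge0. Qed.

End Bounds.

Section Main.
Variable R : realType.
Variables (m1 m2 m1' m2' : nat) (g : gadget m1 m2) (g' : gadget m1' m2').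
Hypothesis hg : forall (S : {set 'I_m1}) (T : {set 'I_m2}),
      (S == set0) || (T == set0) -> ghat (R := R) g S T = 0.
Hypothesis hg' : forall (S : {set 'I_m1'}) (T : {set 'I_m2'}),
      (S == set0) || (T == set0) -> ghat (R := R) g' S T = 0.
Variables (k d n : nat).

Definition Eset (a b : nat) (h : gadget a b) : R -> Prop :=
  fun r => exists C : rproto R (blocks n a) (blocks n b),
          rproto_ok d C /\ r = L1k k (fiber h C).

Lemma C0_ok a b : rproto_ok d ([:: (1, PLeaf (blocks n a) (blocks n b) false)] : rproto R _ _).
Proof. by split; rewrite ?big_cons ?big_nil ?addr0 //= ler01. Qed.

Lemma Eset_ne a b (h : gadget a b) : exists r, Eset h r.
Proof. by eexists; exists [:: (1, PLeaf _ _ false)]; split; first exact: C0_ok. Qed.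

Lemma Eset'_sup : classical_sets.has_sup (Eset g').
Proof.
split; first exact: Eset_ne.
exists (#|{: {set 'I_n}}|%:R) => r [C [okC ->]].
have h00 : ghat (R := R) g' set0 set0 = 0 by apply: hg'; rewrite eqxx.
have := L1k_bound h00 k okC; exact.
Qed.

Lemma sup'_ge0 : 0 <= L1k_sup (R := R) g' d n k.
Proof.
have [r Er] := Eset_ne g'.
apply: le_trans (sup_upper_bound Eset'_sup Er).
by case: Er => C [_ ->]; exact: L1k_ge0.
Qed.

Variable qs : pairT m1' m2'.
Hypothesis hmax : forall q, `|gh R g' q| <= `|gh R g' qs|.

Lemma a_sq : 1 <= 2 ^+ (m1' + m2') * `|gh R g' qs| ^+ 2.
Proof.
apply: (@le_trans _ _ (\sum_(q : pairT m1' m2') `|gh R g' qs| ^+ 2)).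
  rewrite -{1}(parseval R g'); apply: ler_sum => q _.
  rewrite -real_normK ?num_real //; apply: lerXn2r; rewrite ?nnegrE ?normr_ge0 //.
by rewrite sumr_const -(mulr_natl (`|gh R g' qs| ^+ 2)) (card_pairR R m1' m2').
Qed.

Lemma a_pos : 0 < `|gh R g' qs|.
Proof.
have := a_sq; rewrite lt_neqAle normr_ge0 andbT eq_sym.
apply: contraTN => /eqP ->; rewrite expr0n /= mulr0 ler10 //.
Qed.

Lemma qs_ne : (qs.1 != set0) && (qs.2 != set0).
Proof.
have := a_pos; apply: contraTT; rewrite negb_and !negbK => H.
by rewrite /gh hg' // normr0 ltxx.
Qed.

Lemma per_C (C : rproto R (blocks n m1) (blocks n m2)) : rproto_ok d C ->
  L1k k (fiber g C) <= Wg R g ^+ k * (`|gh R g' qs| ^- k * L1k_sup (R := R) g' d n k).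
Proof.
move=> okC.
have g00 : ghat (R := R) g set0 set0 = 0 by apply: hg; rewrite eqxx.
have W0 := W_pos R g.
have q0 : 0 <= ((2 ^+ (n * (m1 + m2)))^-1 : R) by rewrite invr_ge0 exprn_ge0 // ler0n.
rewrite /L1k.
under eq_bigr => I _ do rewrite fiber_fhat // normrM (ger0_norm q0).
apply: le_trans.
  apply: ler_sum => J HJ; apply: ler_wpM2l; first exact: q0.
  have H := dirA W0 (rval C) J; rewrite (eqP HJ) in H; exact: H.
have -> : \sum_(J : {set 'I_n} | #|J| == k) (2 ^+ (n * (m1 + m2)))^-1 *
   (Wg R g ^+ k * \sum_tau ptau R g tau * `|Lam (rval C) tau J|)
   = Wg R g ^+ k * \sum_tau ptau R g tau * ((2 ^+ (n * (m1 + m2)))^-1 *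
       \sum_(J : {set 'I_n} | #|J| == k) `|Lam (rval C) tau J|).
  transitivity (\sum_tau \sum_(J : {set 'I_n} | #|J| == k) Wg R g ^+ k * (ptau R g tau *
       ((2 ^+ (n * (m1 + m2)))^-1 * `|Lam (rval C) tau J|))).
    rewrite exchange_big /=; apply: eq_bigr => J _.
    rewrite mulr_sumr mulr_sumr; apply: eq_bigr => tau _; ring.
  rewrite mulr_sumr; apply: eq_bigr => tau _.
  rewrite mulr_sumr mulr_sumr mulr_sumr; apply: eq_bigr => J _; ring.
apply: ler_wpM2l; first by rewrite exprn_ge0 // ltW.
apply: (@le_trans _ _ (\sum_tau ptau R g tau *
   (`|gh R g' qs| ^- k * L1k_sup (R := R) g' d n k))); last first.
  by rewrite -mulr_suml ptau_sum // mul1r.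
apply: ler_sum => tau _.
have [p0|pn0] := eqVneq (ptau R g tau) 0; first by rewrite p0 !mul0r.
apply: ler_wpM2l; first exact: ptau_ge0 W0 _.
have tau0 : forall i, ((tau i).1 != set0) && ((tau i).2 != set0).
  move=> i; move: pn0 => /prodf_neq0 /(_ i isT).
  rewrite mulf_eq0 invr_eq0 negb_or => /andP [h _].
  rewrite -negb_or; apply: contra h => /hg; rewrite /gh => ->; rewrite normr0.
  by [].
have /andP [S'0 T'0] := qs_ne.
have h00 : ghat (R := R) g' set0 set0 = 0 by apply: hg'; rewrite eqxx.
have hS0 : ghat (R := R) g' qs.1 set0 = 0 by apply: hg'; rewrite eqxx orbT.
have h0T : ghat (R := R) g' set0 qs.2 = 0 by apply: hg'; rewrite eqxx.
set C'' := mix (alT qs.1 tau) (beT qs.2 tau) C.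
have okC'' : rproto_ok d C''.
  apply: mix_ok okC; apply/card_gt0P.
  by exists ([ffun=> [ffun=> false]], [ffun=> [ffun=> false]]).
have E : L1k k (fiber g' C'') = `|gh R g' qs| ^+ k *
    ((2 ^+ (n * (m1 + m2)))^-1 * \sum_(J : {set 'I_n} | #|J| == k) `|Lam (rval C) tau J|).
  rewrite /L1k mulr_sumr mulr_sumr; apply: eq_bigr => J /eqP HI.
  rewrite (key S'0 T'0 h00 hS0 h0T tau0) normrM normrM normrX HI (ger0_norm q0).
  rewrite /gh; ring.
have ak : `|gh R g' qs| ^+ k != 0 by rewrite expf_neq0 // gt_eqF // a_pos.
apply: (@le_trans _ _ (`|gh R g' qs| ^- k * L1k k (fiber g' C''))).
  by rewrite E mulrA mulVf // mul1r.
apply: ler_wpM2l; first by rewrite invr_ge0 exprn_ge0 // normr_ge0.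
apply: (sup_upper_bound (Eset'_sup)).
by exists C''.
Qed.

End Main.

Unset Implicit Arguments. Set Strict Implicit. Set Printing Implicit Defensive.

Theorem corollary7p7 (R : realType) (m1 m2 m1' m2' : nat)
  (g : gadget m1 m2) (g' : gadget m1' m2') :
  (forall (S : {set 'I_m1}) (T : {set 'I_m2}),
      (S == set0) || (T == set0) -> ghat (R := R) g S T = 0) ->
  (forall (S : {set 'I_m1'}) (T : {set 'I_m2'}),
      (S == set0) || (T == set0) -> ghat (R := R) g' S T = 0) ->
  forall k d n : nat,
    L1k_sup (R := R) g d n k <=
    Num.sqrt (2 ^+ ((m1 + m2 + m1' + m2') * k)) * L1k_sup (R := R) g' d n k.
Proof.
move=> hg hg' k d n.
have [qs hmax] := ex_max ((set0, set0) : pairT m1' m2') (fun q => `|gh R g' q|).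
have apos := a_pos hmax.
have W0 := W_pos R g.
set a := `|gh R g' qs| in apos *.
set c := (Wg R g / a) ^+ k.
have c0 : 0 <= c by rewrite exprn_ge0 // divr_ge0 // ltW.
have E1 : L1k_sup (R := R) g d n k <= c * L1k_sup (R := R) g' d n k.
  apply: ge_sup; first by have [r Er] := Eset_ne R k d n g; exists r.
  move=> r [C [okC ->]]; apply: le_trans (per_C hg hg' k hmax okC) _.
  by rewrite /c exprMn exprVn mulrA.
apply: le_trans E1 _; apply: ler_wpM2r; first exact: sup'_ge0 hg' k d n.
rewrite -(ger0_norm c0) -sqrtr_sqr ler_sqrt; last by rewrite exprn_ge0 // ler0n.
rewrite /c -exprM mulnC exprM [in X in _ <= X]exprM.
have Wa0 : 0 <= Wg R g / a by rewrite divr_ge0 // ltW.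
apply: lerXn2r; rewrite ?nnegrE ?exprn_ge0 ?ler0n //.
rewrite -!addnA addnA exprD expr_div_n.
apply: ler_pM.
- by rewrite exprn_ge0 // ltW.
- by rewrite invr_ge0 exprn_ge0 // ltW.
- exact: W_sq.
rewrite -[_^-1]mul1r ler_pdivrMr ?exprn_gt0 //.
exact: (a_sq hmax).
Qed.
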